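(* Let $G$ be a finite simple graph with $n$ vertices $v_1,\dots,v_n$ and let $\bar{\bar{d}}=\sqrt{\frac{d(v_1)^2+\cdots+d(v_n)^2}{n}}$. Let $u_1,u_2,\dots,u_r$, $r\geq 2$, be a $\beta$-sequence in $G$ such that $$d(u_1)+d(u_2)+\cdots+d(u_r)\leq (r-1)n.$$ Then $$r\geq \frac{n}{n-\bar{\bar{d}}}.$$
   Context: All graphs are finite, undirected, without loops or multiple edges; $d(v)$ is the degree of $v$ in $G$, $N(v)$ is the set of neighbours of $v$, and $N(u_1,\dots,u_k)=\bigcap_{i=1}^k N(u_i)$. A sequence $u_1,\dots,u_r$ of vertices of $G$ is a $\beta$-sequence if (i) $d(u_1)=\max\{d(v): v\in V(G)\}$ and (ii) for $2\le i\le r$, $u_i\in N(u_1,\dots,u_{i-1})$ and $d(u_i)=\max\{d(v): v\in N(u_1,\dots,u_{i-1})\}$. *)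

(* Defs.v *)
From mathcomp Require Import all_boot all_order all_algebra.
Set Implicit Arguments. Unset Strict Implicit. Unset Printing Implicit Defensive.
Import Order.TTheory GRing.Theory Num.Theory.

Definition simple_graph (V : finType) (e : rel V) : Prop :=
  symmetric e /\ irreflexive e.

Definition nbhd (V : finType) (e : rel V) (v : V) : {set V} := [set w | e v w].
Definition deg (V : finType) (e : rel V) (v : V) : nat := #|nbhd e v|.

Definition common_nbhd (V : finType) (e : rel V) (s : seq V) : {set V} :=
  [set w | all (fun u => e u w) s].

(* s = [:: u_1; ...; u_r] is a beta-sequence.  Index i (0-based) corresponds to
   u_{i+1}; take i s = [:: u_1; ...; u_i]. *)
Definition beta_seq (V : finType) (e : rel V) (s : seq V) : Prop :=
  match s with
  | [::] => False
  | u1 :: _ =>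
      deg e u1 = \max_(v : V) deg e v /\
      forall i : nat, 0 < i < size s ->
        nth u1 s i \in common_nbhd e (take i s) /\
        deg e (nth u1 s i) = \max_(v in common_nbhd e (take i s)) deg e v
  end.

Definition quad_mean_deg (R : rcfType) (V : finType) (e : rel V) : R :=
  Num.sqrt ((\sum_(v : V) (deg e v) ^ 2)%:R / (#|V|)%:R).

(* Main.v *)
Require Import Defs.
From mathcomp Require Import all_boot all_order all_algebra.
From mathcomp Require Import ring lra.
Import Order.TTheory GRing.Theory Num.Theory.
Set Implicit Arguments. Unset Strict Implicit. Unset Printing Implicit Defensive.
Lemma cn_nil (V : finType) (e : rel V) : common_nbhd e [::] = [set: V].
Proof. by apply/setP => w; rewrite !inE. Qed.

Lemma cn_sub (V : finType) (e : rel V) (s : seq V) i j : i <= j ->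
  common_nbhd e (take j s) \subset common_nbhd e (take i s).
Proof.
move=> ij; apply/subsetP => w; rewrite !inE.
by rewrite -(cat_take_drop i (take j s)) all_cat take_takel // => /andP [].
Qed.

Lemma cn_mem (V : finType) (e : rel V) (s : seq V) x0 i w :
  (forall j, j < i -> j < size s -> e (nth x0 s j) w) ->
  w \in common_nbhd e (take i s).
Proof.
move=> h; rewrite inE; apply/(all_nthP x0) => j; rewrite size_take_min => hj.
rewrite nth_take; last by move: hj; rewrite leq_min => /andP [].
by apply: h; move: hj; rewrite leq_min => /andP [].
Qed.

Lemma deg_le (V : finType) (e : rel V) v : deg e v <= #|V|.
Proof. exact: max_card. Qed.



Lemma amax (V : finType) (e : rel V) u1 s' : beta_seq e (u1::s') ->
  forall i, i < size (u1::s') -> deg e (nth u1 (u1::s') i) =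
   \max_(v in common_nbhd e (take i (u1::s'))) deg e v.
Proof.
case=> hmax hbi [|i] hi /=.
  by rewrite cn_nil hmax; apply: eq_bigl => v; rewrite inE.
by have [] := hbi i.+1 hi.
Qed.

Lemma le_a (V : finType) (e : rel V) u1 s' : beta_seq e (u1::s') ->
  forall i w, i < size (u1::s') -> w \in common_nbhd e (take i (u1::s')) ->
  deg e w <= deg e (nth u1 (u1::s') i).
Proof. by move=> hb i w hi hw; rewrite (amax hb hi); exact: leq_bigmax_cond. Qed.

Lemma a_mono (V : finType) (e : rel V) u1 s' : beta_seq e (u1::s') ->
  forall j k, j <= k -> k < size (u1::s') ->
  deg e (nth u1 (u1::s') k) <= deg e (nth u1 (u1::s') j).
Proof.
move=> hb j [|k] jk hk.
  by move: jk; rewrite leqn0 => /eqP ->.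
have [_ hbi] := hb.
have [mem _] := hbi k.+1 hk.
apply: (le_a hb); first exact: leq_ltn_trans hk.
exact: (subsetP (cn_sub _ _ jk)).
Qed.


Local Open Scope ring_scope.

Lemma tangent (R : realFieldType) (n t b : R) : 0 <= b -> b <= n -> 0 <= t ->
  2 * t <= n ->
  b * (n - b)^+2 <= t * (n-t)^+2 + (n-t)*(n-3*t)*(b-t).
Proof.
move=> b0 bn t0 tn.
have -> : b * (n - b)^+2 = t * (n-t)^+2 + (n-t)*(n-3*t)*(b-t) + (b-t)^+2 * (b - (2*n - 2*t)) by ring.
have h : (b-t)^+2 * (b - (2*n - 2*t)) <= 0.
  by apply: mulr_ge0_le0; [exact: sqr_ge0 | lra].
lra.
Qed.

Lemma cubic (R : realFieldType) (n t B : R) (k : R) : 0 <= B -> 2 * t <= n -> k * t = n - t ->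
  k * (t * (n-t)^+2 - (n-t)*(n-3*t)*t) + (n-t)*(n-3*t)*B + (n - B) * B^+2
  <= n * (n - t)^+2.
Proof.
move=> B0 tn kt.
have -> : k * (t * (n-t)^+2 - (n-t)*(n-3*t)*t) = (k * t) * ((n-t)^+2 - (n-t)*(n-3*t)) by ring.
rewrite kt.
have -> : (n - t) * ((n - t) ^+ 2 - (n - t) * (n - 3 * t)) + (n - t) * (n - 3 * t) * B +
   (n - B) * B ^+ 2 = n * (n - t)^+2 - (B - (n-t))^+2 * (B - (2*t - n)) by ring.
have h : 0 <= (B - (n-t))^+2 * (B - (2*t - n)).
  by apply: mulr_ge0; [exact: sqr_ge0 | lra].
lra.
Qed.

Lemma numsum (R : realFieldType) (n a : R) (k : nat) (b : nat -> R) :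
 0 < n -> (forall j, (j < k)%N -> 0 <= b j <= n) -> 0 <= a ->
 a <= \sum_(j < k) b j -> \sum_(j<k) b j <= n ->
 \sum_(j < k) b j * (n - b j)^+2 + (n - \sum_(j<k) b j) * a^+2
   <= n * (n - n / k.+1%:R)^+2.
Proof.
move=> n0 hb a0 aB Bn.
set B := \sum_(j<k) b j.
set t := n / k.+1%:R.
have kt : k%:R * t = n - t.
  rewrite /t; have h : (k%:R + 1 : R) != 0 by rewrite natr1 pnatr_eq0.
  rewrite -natr1; field.
  exact: h.
case: k hb @B @t aB Bn kt => [|k] hb B t aB Bn kt.
  rewrite /B big_ord0 in aB *.
  have -> : a = 0 by apply/eqP; rewrite eq_le aB a0.
  by rewrite /t divr1 subrr big_ord0 expr0n /= !mulr0 addr0.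
have aB' : a <= B by [].
have Bn' : B <= n by [].
have t0 : 0 <= t by rewrite /t divr_ge0 // ltW.
have tn : 2 * t <= n.
  have h1 : 1 <= (k.+1%:R : R) by rewrite ler1n.
  have : 1 * t <= k.+1%:R * t by apply: ler_wpM2r.
  lra.
have s1 : \sum_(j < k.+1) b j * (n - b j)^+2 <=
   \sum_(j < k.+1) (t * (n-t)^+2 + (n-t)*(n-3*t)*(b j - t)).
  apply: ler_sum => j _; have := hb j (ltn_ord j) => /andP [h1 h2].
  exact: tangent.
have s2 : \sum_(j < k.+1) (t * (n-t)^+2 + (n-t)*(n-3*t)*(b j - t)) =
   k.+1%:R * (t * (n-t)^+2 - (n-t)*(n-3*t)*t) + (n-t)*(n-3*t)*B.
  rewrite big_split /= sumr_const card_ord -mulr_sumr sumrB sumr_const card_ord.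
  rewrite /B -[_ *+ _]mulr_natl -[t *+ _]mulr_natl; ring.
have B0 : 0 <= B by apply: sumr_ge0 => j _; have /andP[] := hb j (ltn_ord j).
have s3 : (n - B) * a^+2 <= (n - B) * B^+2.
  apply: ler_wpM2l; first by rewrite subr_ge0.
  by rewrite ler_sqr ?nnegrE.
have := @cubic _ n t B k.+1%:R B0 tn kt.
lra.
Qed.


Lemma sum_nonadj (R : numDomainType) (V : finType) (e : rel V) u :
  \sum_v (1 - (e u v)%:R : R) = #|V|%:R - (deg e u)%:R.
Proof.
rewrite sumrB sumr_const; congr (_ - _).
rewrite /deg /nbhd -natr_sum; congr (_%:R).
rewrite -sum1_card [RHS]big_mkcond /=; apply: eq_bigr => v _; rewrite inE.
by case: (e u v).
Qed.

Definition Aa (R : numDomainType) (V : finType) (e : rel V) (S : seq V) (x0 : V) (i : nat) : R :=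
  (deg e (nth x0 S i))%:R.

Lemma term_ge0 (R : realFieldType) (V : finType) (e : rel V) u1 s' :
  beta_seq e (u1::s') -> forall k (j : 'I_k) v, (k < size (u1::s'))%N ->
  0 <= (1 - (e (nth u1 (u1::s') j) v)%:R) * (Aa R e (u1::s') u1 j ^+ 2 - Aa R e (u1::s') u1 k ^+ 2).
Proof.
move=> hb k j v hk; apply: mulr_ge0.
  by case: (e _ v); rewrite ?subrr ?subr0.
rewrite subr_ge0 /Aa -!natrX ler_nat leq_sqr.
apply: (a_mono hb) => //; exact: ltnW.
Qed.

Lemma pointwise (R : realFieldType) (V : finType) (e : rel V) u1 s' :
  beta_seq e (u1::s') -> forall k v, (k < size (u1::s'))%N ->
  (deg e v)%:R ^+ 2 <= Aa R e (u1::s') u1 k ^+ 2 +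
    \sum_(j < k) (1 - (e (nth u1 (u1::s') j) v)%:R) *
       (Aa R e (u1::s') u1 j ^+ 2 - Aa R e (u1::s') u1 k ^+ 2).
Proof.
move=> hb k v hk.
set S := u1 :: s'.
have sge0 : 0 <= \sum_(j < k) (1 - (e (nth u1 S j) v)%:R) *
       (Aa R e S u1 j ^+ 2 - Aa R e S u1 k ^+ 2).
  by apply: sumr_ge0 => j _; apply: term_ge0.
case: (boolP [exists j : 'I_k, ~~ e (nth u1 S j) v]) => [hex|hnex].
  have exP : exists j, (j < k)%N && ~~ e (nth u1 S j) v.
    by case/existsP: hex => j hj; exists j; rewrite ltn_ord.
  case: (ex_minnP exP) => j0 /andP [j0k hj0] hmin.
  have hv : v \in common_nbhd e (take j0 S).
    apply: (@cn_mem _ _ _ u1) => i ij _.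
    apply/negPn/negP => hn.
    have := hmin i; rewrite hn (ltn_trans ij j0k) => /(_ isT).
    by rewrite leqNgt ij.
  have hdv : (deg e v <= deg e (nth u1 S j0))%N.
    by apply: (le_a hb) => //; exact: ltn_trans hk.
  rewrite (bigD1 (Ordinal j0k)) //= (negbTE hj0) subr0 mul1r.
  have rest : 0 <= \sum_(i < k | i != Ordinal j0k) (1 - (e (nth u1 S i) v)%:R) *
       (Aa R e S u1 i ^+ 2 - Aa R e S u1 k ^+ 2).
    by apply: sumr_ge0 => i _; apply: term_ge0.
  have : (deg e v)%:R ^+ 2 <= Aa R e S u1 j0 ^+ 2 :> R.
    by rewrite /Aa -!natrX ler_nat leq_sqr.
  lra.
have hv : v \in common_nbhd e (take k S).
  apply: (@cn_mem _ _ _ u1) => i ik _.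
  move: hnex; rewrite negb_exists => /forallP /(_ (Ordinal ik)) /=.
  by rewrite negbK.
have hdv : (deg e v <= deg e (nth u1 S k))%N by apply: (le_a hb).
have : (deg e v)%:R ^+ 2 <= Aa R e S u1 k ^+ 2 :> R.
  by rewrite /Aa -!natrX ler_nat leq_sqr.
lra.
Qed.
Lemma sumbound (R : realFieldType) (V : finType) (e : rel V) u1 s' :
  beta_seq e (u1::s') -> forall k, (k < size (u1::s'))%N ->
  \sum_v (deg e v)%:R ^+ 2 <= #|V|%:R * Aa R e (u1::s') u1 k ^+ 2 +
    \sum_(j < k) (#|V|%:R - Aa R e (u1::s') u1 j) *
       (Aa R e (u1::s') u1 j ^+ 2 - Aa R e (u1::s') u1 k ^+ 2).
Proof.
move=> hb k hk.
apply: le_trans (ler_sum _ (fun v _ => pointwise R hb v hk)) _.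
rewrite big_split /= sumr_const exchange_big /=.
apply: lerD; first by rewrite -[X in X <= _]mulr_natl.
apply: ler_sum => j _.
by rewrite -mulr_suml sum_nonadj.

Qed.

Unset Implicit Arguments.

Theorem corollary4p2 (R : rcfType) (V : finType) (e : rel V) (s : seq V) :
  simple_graph e ->
  beta_seq e s ->
  (2 <= size s)%N ->
  (\sum_(u <- s) deg e u <= (size s - 1) * #|V|)%N ->
  (#|V|%:R / (#|V|%:R - quad_mean_deg R e) <= (size s)%:R :> R).
Proof.
move=> _ hb hs hsum.
case: s hb hs hsum => [//|u1 s'] hb hs hsum.
pose r := size (u1::s').
pose a i := deg e (nth u1 (u1::s') i).
have hsum' : (\sum_(i < r) a i <= (r - 1) * #|V|)%N.
  by move: hsum; rewrite (big_nth u1) big_mkord.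
pose P m := [&& (0 < m)%N, (m <= r)%N & (\sum_(i < m) a i <= (m-1)*#|V|)%N].
have exP : exists m, P m by exists r; rewrite /P hsum' leqnn.
case: (ex_minnP exP) => m /and3P [m0 mr hm] hmin.
case: m m0 mr hm hmin => [//|k] _ kr hm hmin.
rewrite subn1 /= in hm.
pose nR : R := #|V|%:R.
have n0 : 0 < nR by rewrite /nR ltr0n; apply/card_gt0P; exists u1.
pose A := Aa R e (u1::s') u1.
pose b j := nR - A j.
have A0 : forall j, 0 <= A j by move=> j; rewrite /A /Aa ler0n.
have An : forall j, A j <= nR by move=> j; rewrite /A /Aa /nR ler_nat deg_le.
have sb : \sum_(j < k) b j = k%:R * nR - \sum_(j < k) A j.
  by rewrite /b sumrB sumr_const card_ord mulr_natl.
have hB : A k <= \sum_(j < k) b j.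
  move: hm; rewrite -(ler_nat R) natr_sum natrM big_ord_recr /= sb.
  have -> : \sum_(i < k) (a i)%:R = \sum_(j < k) A j :> R by [].
  rewrite -/nR; lra.
have hBn : \sum_(j < k) b j <= nR.
  case: k kr hm hmin sb hB => [|k] kr hm hmin sb hB.
    by rewrite big_ord0; lra.
  have : ~~ P k.+1.
    by apply/negP => /hmin; rewrite ltnn.
  rewrite /P /= (ltnW kr) /= subn1 /= -ltnNge => hlt.
  move: hlt; rewrite -(ltr_nat R) natr_sum natrM => hlt.
  have e2 : \sum_(i < k.+1) (a i)%:R = \sum_(j < k.+1) A j :> R by [].
  rewrite e2 -/nR in hlt; rewrite sb -(natr1 (R:=R) k).
  lra.
have key := sumbound R hb kr.
have E : \sum_(j < k) (nR - A j) * (A j ^+ 2 - A k ^+ 2) =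
    \sum_(j < k) b j * (nR - b j)^+2 - (\sum_(j < k) b j) * A k ^+ 2.
  by rewrite mulr_suml -sumrB; apply: eq_bigr => j _; rewrite /b; ring.
have hbj : forall j, (j < k)%N -> 0 <= b j <= nR.
  by move=> j _; apply/andP; split; rewrite /b; have := A0 j; have := An j; lra.
have num := @numsum _ nR (A k) k b n0 hbj (A0 k) hB hBn.
have Qb : \sum_v (deg e v)%:R ^+ 2 <= nR * (nR - nR / k.+1%:R) ^+ 2.
  move: key; rewrite -/nR -/A E; move: num; rewrite mulrBl; move=> h1 h2; apply: (le_trans h2); by rewrite addrCA.
pose x := nR / r%:R.
pose y := nR / k.+1%:R.
have r0 : (0 : R) < r%:R by rewrite ltr0n.
have k0 : (0 : R) < k.+1%:R by rewrite ltr0n.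
have hx : x * r%:R = nR by rewrite /x divfK // gt_eqF.
have hy : y * k.+1%:R = nR by rewrite /y divfK // gt_eqF.
have kr' : (k.+1%:R : R) <= r%:R by rewrite ler_nat.
have k1 : (1 : R) <= k.+1%:R by rewrite ler1n.
have x0 : 0 < x by rewrite /x divr_gt0.
have y0 : 0 < y by rewrite /y divr_gt0.
have xy : x <= y.
  have : x * k.+1%:R <= x * r%:R by rewrite ler_wpM2l // ltW.
  rewrite hx -hy ler_pM2r //.
have yn : y <= nR.
  have : y * 1 <= y * k.+1%:R by rewrite ler_wpM2l // ltW.
  by rewrite hy mulr1.
have sq : (nR - y) ^+ 2 <= (nR - x) ^+ 2.
  rewrite ler_sqr ?nnegrE; lra.
have Q2 : \sum_v (deg e v)%:R ^+ 2 <= nR * (nR - x) ^+ 2.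
  apply: le_trans Qb _; rewrite -/y ler_wpM2l //; exact: ltW.
rewrite /quad_mean_deg -/nR natr_sum.
have -> : \sum_v ((deg e v) ^ 2)%:R = \sum_v (deg e v)%:R ^+ 2 :> R.
  by apply: eq_bigr => v _; rewrite natrX.
set Q := \sum_v _.
have hQ : Q / nR <= (nR - x) ^+ 2 by rewrite ler_pdivrMr // mulrC.
have hs' : Num.sqrt (Q / nR) <= nR - x.
  have := ler_wsqrtr hQ; rewrite sqrtr_sqr ger0_norm //; lra.
have D0 : x <= nR - Num.sqrt (Q / nR) by lra.
rewrite ler_pdivrMr; last lra.
have : r%:R * x <= r%:R * (nR - Num.sqrt (Q / nR)) by rewrite ler_wpM2l // ltW.
rewrite mulrC hx mulrC //.
Qed.
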